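(* Let $n=2$. The map $\mathcal M:\Omega\to\mathbb R^5$, $W=(w_1,u_1,w_2,u_2,\sigma)\mapsto(M_0,\dots,M_4)^T$ with $M_j=\sum_{i=1}^2 w_i\Delta_j(u_i,\sigma)$, is injective on $\Omega=\{W\in\mathbb R^5: w_1>0,\ w_2>0,\ u_1<u_2,\ \sigma>0\}$ if and only if the kernel satisfies $\mathfrak m_4\ge 3+\frac98\mathfrak m_3^2$.
   Context: Let $\mathcal K:\mathbb R\to[0,\infty)$ be a kernel with $\mathfrak m_j:=\int_{\mathbb R}\xi^j\mathcal K(\xi)\,d\xi<\infty$ for all $j\in\mathbb N$; the kernel is assumed normalized: $\mathfrak m_0=1$, $\mathfrak m_1=0$, $\mathfrak m_2=1$. For $u\in\mathbb R$, $\sigma>0$, $\Delta_j(u,\sigma)=\int_{\mathbb R}\xi^j\frac1\sigma\mathcal K\!\left(\frac{\xi-u}{\sigma}\right)d\xi=\sum_{k=0}^j\binom jk\mathfrak m_k\sigma^ku^{j-k}$. *)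

(* Defs.v *)
From HB Require Import structures.
From mathcomp Require Import all_boot all_order all_algebra.
From mathcomp Require Import all_classical all_reals all_analysis.
Set Implicit Arguments. Unset Strict Implicit. Unset Printing Implicit Defensive.
Import Order.TTheory GRing.Theory Num.Theory.
Local Open Scope ring_scope.
Local Open Scope classical_set_scope.

Definition is_kernel (R : realType) (K : R -> R) : Prop :=
  (forall x, 0 <= K x) /\ measurable_fun setT K /\
  (forall j : nat, (@lebesgue_measure R).-integrable setT
                     (fun x => (x ^+ j * K x)%:E)).

Definition kmoment (R : realType) (K : R -> R) (j : nat) : R :=
  Rintegral (@lebesgue_measure R) setT (fun x => x ^+ j * K x).

Definition normalized (R : realType) (K : R -> R) : Prop :=
  kmoment K 0 = 1 /\ kmoment K 1 = 0 /\ kmoment K 2 = 1.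

(* Delta_j(u, sigma) = sum_{k=0}^j binom(j,k) m_k sigma^k u^(j-k)
   (the closed form given in the paper for the integral
    \int xi^j (1/sigma) K((xi-u)/sigma) dxi). *)
Definition Delta (R : realType) (K : R -> R) (j : nat) (u sigma : R) : R :=
  \sum_(k < j.+1) ('C(j, k))%:R * kmoment K k * sigma ^+ k * u ^+ (j - k).

Definition param (R : realType) := (R * R * R * R * R)%type.

Definition Mmap (R : realType) (K : R -> R) (W : param R) (j : nat) : R :=
  let: (w1, u1, w2, u2, s) := W in
  w1 * Delta K j u1 s + w2 * Delta K j u2 s.

Definition Omega (R : realType) (W : param R) : Prop :=
  let: (w1, u1, w2, u2, s) := W in
  0 < w1 /\ 0 < w2 /\ u1 < u2 /\ 0 < s.

Definition injective_on_Omega (R : realType) (K : R -> R) : Prop :=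
  forall W W' : param R, Omega W -> Omega W' ->
    (forall j : 'I_5, Mmap K W j = Mmap K W' j) -> W = W'.

(* Main.v *)
Require Import Defs.
From HB Require Import structures.
From mathcomp Require Import all_boot all_order all_algebra.
From mathcomp Require Import all_classical all_reals all_analysis.
Import Order.TTheory GRing.Theory Num.Theory.
Local Open Scope ring_scope.
From mathcomp Require Import ring lra.

Section Alg.
Variable R : realType.

Lemma ineq1 (m c A s s' : R) : 0 < s -> s < s' -> s'^+2 < A -> 9/8 * m^+2 <= c ->
  m^+2 * (s^+2 + s*s' + s'^+2)^+2 < (s+s')^+2 * (4*A + (c-2)*(s^+2+s'^+2)).
Proof.
move=> hs hss hA hc.
set X := s^+2 + s*s' + s'^+2. set S := s^+2 + s'^+2. set T := (s+s')^+2.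
have P1 : 8 * X^+2 <= 9 * S * T.
  rewrite -subr_ge0.
  have -> : 9 * S * T - 8 * X^+2 = (s-s')^+2 * (s^+2+s'^+2+4*(s*s')) by rewrite /S /T /X; ring.
  apply: mulr_ge0; first exact: sqr_ge0.
  have : 0 < s * s' by apply: mulr_gt0; lra.
  have := sqr_ge0 s; have := sqr_ge0 s'. lra.
have hT : 0 < T by rewrite /T; apply: exprn_gt0; lra.
have hs2 : s^+2 < s'^+2 by nra.
have P2 : 0 < T * (4*A - 2*S).
  apply: mulr_gt0 => //; rewrite /S; lra.
have hS : 0 <= S by rewrite /S; have := sqr_ge0 s; have := sqr_ge0 s'; lra.
have P3 : m^+2 * X^+2 <= T * c * S.
  have h1 : T * (9/8 * m^+2) * S <= T * c * S.
    by apply: ler_wpM2r => //; apply: ler_wpM2l => //; lra.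
  have h2 : m^+2 * X^+2 <= T * (9/8 * m^+2) * S.
    have := ler_wpM2l (sqr_ge0 m) P1. move=> h. 
    have -> : T * (9 / 8 * m ^+ 2) * S = m^+2 * (9 * S * T) / 8 by ring.
    rewrite ler_pdivlMr; last by lra. 
    move: h; rewrite mulrA. lra.
  lra.
have -> : T * (4 * A + (c - 2) * S) = T * (4*A - 2*S) + T * c * S by ring.
lra.
Qed.
Lemma sig_contra (m c A s s' e e' : R) :
 0 < s -> s < s' -> s'^+2 < A -> 9/8 * m^+2 <= c ->
 e + m * s^+3 = e' + m * s'^+3 ->
 e^+2/(A - s^+2) - 2*(A-s^+2)^+2 + c*s^+4 = e'^+2/(A - s'^+2) - 2*(A-s'^+2)^+2 + c*s'^+4 -> False.
Proof.
move=> hs hss hA hc hB hC.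
have hs2 : s^+2 < s'^+2 by nra.
set v := A - s^+2. set v' := A - s'^+2.
have hv' : 0 < v' by rewrite /v'; lra.
have hv : 0 < v by rewrite /v; lra.
set d := m * (s'^+3 - s^+3).
have he : e = e' + d by rewrite /d mulrBr; lra.
set Q := (-2*v'^+2 + c*s'^+4) - (-2*v^+2 + c*s^+4).
have H0 : e^+2/v - e'^+2/v' = Q.
  rewrite /Q /v /v'; lra.
have H : e^+2 * v' - e'^+2 * v = v * v' * Q.
  rewrite -H0; field; rewrite !lt0r_neq0 //.
set a := v' - v.
have key : (a*e' + d*v')^+2 = v*v'*(a*Q + d^+2).
  have : (a*e' + d*v')^+2 - v*v'*(a*Q + d^+2) = a*(e^+2*v' - e'^+2*v - v*v'*Q).
    by rewrite he /a; ring.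
  by rewrite H subrr mulr0 => /eqP; rewrite subr_eq0 => /eqP.
have pos : 0 <= a*Q + d^+2.
  by rewrite -(pmulr_rge0 _ (mulr_gt0 hv hv')) -key sqr_ge0.
have id : a*Q + d^+2 = (s'-s)^+2 * (m^+2 * (s^+2 + s*s' + s'^+2)^+2 - (s+s')^+2 * (4*A + (c-2)*(s^+2+s'^+2))).
  by rewrite /a /Q /d /v /v'; ring.
have := @ineq1 m c A s s' hs hss hA hc.
move: pos; rewrite id pmulr_rge0; first lra.
by apply: exprn_gt0; lra.
Qed.
Lemma key_ineq (m c eps h t1 t2 : R) :
  eps = 9/4 * m^+2 - 2*c -> 0 < eps -> 0 < h ->
  h * (6*eps + 24 + 2 * m^+2) = eps -> 6 * h <= 1 ->
  t1 = 1 - 2*h -> t2 = 1 - h ->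
  (t1 + t2)^+2 * (4 + (c-2)*(t1^+2+t2^+2)) <= m^+2 * (t1^+2 + t1*t2 + t2^+2)^+2.
Proof.
move=> hE heps hh0 hhN hh6 ht1 ht2.
have hm2 := sqr_ge0 m.
move Xd : (t1^+2 + t1*t2 + t2^+2) => X.
move Td : (t1 + t2) => T.
move Ld : (4 + (c-2)*(t1^+2+t2^+2)) => L.
have hX : 3 * T^+2 <= 4 * X.
  rewrite -subr_ge0 (_ : 4 * X - 3 * T^+2 = (t1 - t2)^+2); first exact: sqr_ge0.
  by rewrite -Xd -Td; ring.
have hT : 0 < T by rewrite -Td ht1 ht2; lra.
have hX2 : 9 * T^+4 <= 16 * X^+2.
  have h3 : 0 <= 3 * T^+2 by have := sqr_ge0 T; lra.
  have := ler_pM h3 h3 hX hX.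
  have -> : 3 * T^+2 * (3 * T^+2) = 9 * T^+4 by ring.
  have -> : 4 * X * (4 * X) = 16 * X^+2 by ring.
  by [].
have hG : 0 <= 9/16 * m^+2 * T^+2 - L.
  have -> : 9/16 * m^+2 * T^+2 - L = - (9/16) * m^+2 * h^+2 - 12 * h + 10 * h^+2 + eps/2 * (2 - 6*h + 5*h^+2).
    by rewrite -Ld -Td ht1 ht2 hE; field.
  have hh2 : h^+2 <= h by rewrite expr2 ger_pMl //; lra.
  have e1 : m^+2 * h^+2 <= m^+2 * h by apply: ler_wpM2l.
  have e2 : 2 * h * (m^+2 + 12) <= eps.
    rewrite -hhN. have : 0 <= h * eps by apply: mulr_ge0; lra.
    have : 0 <= h * m^+2 by apply: mulr_ge0; lra. lra.
  have e3 : 0 <= eps * h^+2 by apply: mulr_ge0; [lra| exact: sqr_ge0].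
  have e4 : 6 * h * eps <= eps by rewrite ger_pMl //.
  have e5 : 0 <= h^+2 := sqr_ge0 h.
  have e6 : 0 <= m^+2 * h^+2 by apply: mulr_ge0.
  lra.
have h1 : T^+2 * L <= T^+2 * (9/16 * m^+2 * T^+2).
  by apply: ler_wpM2l; [exact: sqr_ge0 | lra].
have h2 : m^+2 * (9 * T^+4) <= m^+2 * (16 * X^+2) by apply: ler_wpM2l.
apply: (le_trans h1).
have -> : T ^+ 2 * (9 / 16 * m ^+ 2 * T ^+ 2) = m^+2 * (9 * T^+4) / 16 by ring.
rewrite ler_pdivrMr; last by lra.
lra.
Qed.

Lemma counter (m c : R) : c < 9/8 * m^+2 ->
  exists t1 t2 v1 v2 e1 e2 : R, [/\ 0 < t1, t1 < t2, 0 < v1 & 0 < v2] /\ [/\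
   v1 + t1^+2 = v2 + t2^+2, e1 + m * t1^+3 = e2 + m * t2^+3 &
   e1^+2/v1 - 2*v1^+2 + c*t1^+4 = e2^+2/v2 - 2*v2^+2 + c*t2^+4].
Proof.
move=> hc.
move hE : (9/4 * m^+2 - 2*c) => eps.
have heps : 0 < eps by rewrite -hE; lra.
have hm2 := sqr_ge0 m.
move hNd : (6*eps + 24 + 2 * m^+2) => N.
have hN : 0 < N by rewrite -hNd; lra.
move hd : (eps / N) => h.
have hhN : h * N = eps by rewrite -hd mulfVK // lt0r_neq0.
have hh0 : 0 < h by rewrite -hd divr_gt0.
have hh6 : 6 * h <= 1.
  rewrite -(ler_pM2r hN) mul1r -mulrA hhN -hNd; lra.
move ht1d : (1 - 2*h) => t1.
move ht2d : (1 - h) => t2.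
have ht1 : 0 < t1 by rewrite -ht1d; lra.
have ht12 : t1 < t2 by rewrite -ht1d -ht2d; lra.
have ht2 : t2 < 1 by rewrite -ht2d; lra.
move hv1d : (1 - t1^+2) => v1.
move hv2d : (1 - t2^+2) => v2.
have hv2 : 0 < v2.
  rewrite -hv2d subr_gt0 expr2 -[1](mulr1 1); apply: ltr_pM; lra.
have hv12 : v2 < v1.
  rewrite -hv1d -hv2d ltrD2l ltrN2 !expr2; apply: ltr_pM; lra.
have hv1 : 0 < v1 by lra.
move hdd : (m * (t2^+3 - t1^+3)) => d.
move had : (v2 - v1) => a.
have ha : a != 0 by rewrite -had; apply/negP => /eqP; lra.
move hQd : ((-2*v2^+2 + c*t2^+4) - (-2*v1^+2 + c*t1^+4)) => Q.
have hineq := @key_ineq m c eps h t1 t2 (esym hE) heps hh0 (etrans (congr1 (fun z => h * z) hNd) hhN) hh6 (esym ht1d) (esym ht2d).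
have pos : 0 <= d^+2 + a*Q.
  have -> : d^+2 + a*Q = (t2 - t1)^+2 * (m^+2 * (t1^+2 + t1*t2 + t2^+2)^+2 - (t1 + t2)^+2 * (4 + (c-2)*(t1^+2+t2^+2))).
    by rewrite -hdd -had -hQd -hv1d -hv2d; ring.
  apply: mulr_ge0; [exact: sqr_ge0 | lra].
move hDd : (v1 * v2 * (d^+2 + a*Q)) => D.
have hD : 0 <= D by rewrite -hDd; apply: mulr_ge0 => //; apply: mulr_ge0; lra.
move hrd : (Num.sqrt D) => r.
have hr : r^+2 = D by rewrite -hrd sqr_sqrtr.
move hxd : ((r - d * v2) / a) => x.
have hax : a * x + d * v2 = r by rewrite -hxd mulrC divfK //; ring.
exists t1, t2, v1, v2, (x + d), x; split => //; split.
- by rewrite -hv1d -hv2d; ring.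
- by rewrite -hdd; ring.
have hq : a * ((x + d)^+2 * v2 - x^+2 * v1 - v1 * v2 * Q) = 0.
  have -> : a * ((x + d)^+2 * v2 - x^+2 * v1 - v1 * v2 * Q) = (a * x + d * v2)^+2 - D.
    by rewrite -hDd -had; ring.
  by rewrite hax hr subrr.
move/eqP: hq; rewrite mulf_eq0 (negPf ha) /= subr_eq0 => /eqP hq.
have H0 : (x + d) ^+ 2 / v1 - x ^+ 2 / v2 = Q.
  apply: (@mulfI _ (v1 * v2)); first by rewrite mulf_neq0 // lt0r_neq0.
  rewrite -hq; field; rewrite !lt0r_neq0 //.
move: H0; rewrite -hQd; lra.
Qed.

Definition vv (w1 u1 w2 u2 : R) := w1*w2*(u2-u1)^+2/(w1+w2)^+2.
Definition ee (w1 u1 w2 u2 : R) := w1*w2*(w1-w2)*(u2-u1)^+3/(w1+w2)^+3.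
Definition mu (w1 u1 w2 u2 : R) := (w1*u1+w2*u2)/(w1+w2).

Definition Mc (m m4 W0 x v e s : R) (j : nat) : R :=
  match j with
  | 0 => W0
  | 1 => W0 * x
  | 2 => W0 * (x^+2 + (v + s^+2))
  | 3 => W0 * (x^+3 + 3*x*(v+s^+2) + (e + m * s^+3))
  | _ => W0 * (x^+4 + 6*x^+2*(v+s^+2) + 4*x*(e + m * s^+3) + 3*(v+s^+2)^+2
               + (e^+2/v - 2*v^+2 + (m4-3)*s^+4))
  end.

Lemma cumE (m m4 w1 u1 w2 u2 s : R) : 0 < w1 -> 0 < w2 -> u1 < u2 ->
  [/\ w1*u1 + w2*u2 = Mc m m4 (w1 + w2) (mu w1 u1 w2 u2) (vv w1 u1 w2 u2) (ee w1 u1 w2 u2) s 1,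
      w1*(u1^+2 + s^+2) + w2*(u2^+2+s^+2) = Mc m m4 (w1 + w2) (mu w1 u1 w2 u2) (vv w1 u1 w2 u2) (ee w1 u1 w2 u2) s 2,
      w1*(u1^+3 + 3*s^+2*u1 + m * s^+3) + w2*(u2^+3 + 3*s^+2*u2 + m * s^+3) = Mc m m4 (w1 + w2) (mu w1 u1 w2 u2) (vv w1 u1 w2 u2) (ee w1 u1 w2 u2) s 3 &
      w1*(u1^+4 + 6*s^+2*u1^+2 + 4 * m * s^+3*u1 + m4 * s^+4)
        + w2*(u2^+4 + 6*s^+2*u2^+2 + 4 * m * s^+3*u2 + m4 * s^+4) = Mc m m4 (w1 + w2) (mu w1 u1 w2 u2) (vv w1 u1 w2 u2) (ee w1 u1 w2 u2) s 4].
Proof.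
move=> h1 h2 hu.
have hW : w1 + w2 != 0 by apply/lt0r_neq0; lra.
have hd : u2 - u1 != 0 by apply/lt0r_neq0; lra.
have h1' : w1 != 0 by apply/lt0r_neq0.
have h2' : w2 != 0 by apply/lt0r_neq0.
rewrite /Mc /vv /ee /mu; split; field;
  by rewrite ?hW ?hd ?h1' ?h2'.
Qed.

Lemma build (v e : R) : 0 < v -> exists w1 u1 w2 u2 : R,
  [/\ 0 < w1, 0 < w2, u1 < u2 & w1 + w2 = 1] /\
  [/\ mu w1 u1 w2 u2 = 0, vv w1 u1 w2 u2 = v & ee w1 u1 w2 u2 = e].
Proof.
move=> hv.
have hv3 : 0 < v^+3 by apply: exprn_gt0.
have he2 := sqr_ge0 e.
move hDd : (Num.sqrt (4 * v^+3 + e^+2)) => D.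
have hD2 : D^+2 = 4 * v^+3 + e^+2 by rewrite -hDd sqr_sqrtr //; lra.
have hD : 0 < D by rewrite -hDd sqrtr_gt0; lra.
have hprod : 0 < (D - e) * (D + e).
  rewrite (_ : (D - e) * (D + e) = D^+2 - e^+2); last by ring.
  rewrite hD2; lra.
have hDe1 : 0 < D - e by nra.
have hDe2 : 0 < D + e by nra.
have hDn : D != 0 by apply: lt0r_neq0.
have hvn : v != 0 by apply: lt0r_neq0.
have hS : 4 * v^+3 + e^+2 != 0 by rewrite -hD2 expf_neq0.
move hpd : ((D + e) / (2 * D)) => p.
move hqd : ((D - e) / (2 * D)) => q.
have hpq1 : p + q = 1 by rewrite -hpd -hqd; field.
have hp0 : 0 < p by rewrite -hpd divr_gt0 //; lra.
have hq0 : 0 < q by rewrite -hqd divr_gt0 //; lra.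
move hdd : (D / v) => d.
have hd : 0 < d by rewrite -hdd divr_gt0.
have hpq : p * q = v^+3 / D^+2.
  rewrite -hpd -hqd (_ : (D + e) / (2 * D) * ((D - e) / (2 * D)) = (D^+2 - e^+2) / (4 * D^+2)); last by field.
  by rewrite hD2; field.
have hpmq : p - q = e / D by rewrite -hpd -hqd; field.
have hud : p * d - - (q * d) = d.
  have -> : p * d - - (q * d) = (p + q) * d by ring.
  by rewrite hpq1 mul1r.
exists p, (- (q * d)), q, (p * d); split; split => //.
- nra.
- by rewrite /mu hpq1 divr1; ring.
- rewrite /vv hpq1 expr1n divr1 hud hpq -hdd; field.
  by rewrite hDn hvn.
- rewrite /ee hpq1 expr1n divr1 hud.
  rewrite (_ : p * q * (p - q) * d ^+ 3 = (p * q) * (p - q) * d^+3); last by [].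
  rewrite hpq hpmq -hdd; field.
  by rewrite hDn hvn.
Qed.

Lemma recover (w1 u1 w2 u2 w1' u1' w2' u2' : R) :
  0 < w1 -> 0 < w2 -> u1 < u2 -> 0 < w1' -> 0 < w2' -> u1' < u2' ->
  w1 + w2 = w1' + w2' ->
  mu w1 u1 w2 u2 = mu w1' u1' w2' u2' ->
  vv w1 u1 w2 u2 = vv w1' u1' w2' u2' ->
  ee w1 u1 w2 u2 = ee w1' u1' w2' u2' ->
  [/\ w1 = w1', u1 = u1', w2 = w2' & u2 = u2'].
Proof.
move=> h1 h2 hu h1' h2' hu' hW hx hv he.
have hWn : w1 + w2 != 0 by apply/lt0r_neq0; lra.
have hWn' : w1' + w2' != 0 by apply/lt0r_neq0; lra.
have hdn : u2 - u1 != 0 by apply/lt0r_neq0; lra.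
have hdn' : u2' - u1' != 0 by apply/lt0r_neq0; lra.
have hw1 : w1 != 0 by apply/lt0r_neq0.
have hw2 : w2 != 0 by apply/lt0r_neq0.
have hw1' : w1' != 0 by apply/lt0r_neq0.
have hw2' : w2' != 0 by apply/lt0r_neq0.
have hvpos : 0 < vv w1 u1 w2 u2.
  rewrite /vv; apply: divr_gt0; last by apply: exprn_gt0; lra.
  apply: mulr_gt0; first exact: mulr_gt0.
  by apply: exprn_gt0; lra.
have rid : forall a1 b1 a2 b2 : R, 0 < a1 -> 0 < a2 -> b1 < b2 ->
   a1 * a2 / (a1 + a2)^+2 * ((ee a1 b1 a2 b2)^+2 + 4 * (vv a1 b1 a2 b2)^+3) = (vv a1 b1 a2 b2)^+3.
  move=> a1 b1 a2 b2 ha1 ha2 hb.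
  have : a1 + a2 != 0 by apply/lt0r_neq0; lra.
  have : b2 - b1 != 0 by apply/lt0r_neq0; lra.
  move=> n1 n2; rewrite /ee /vv; field; by rewrite ?n1 ?n2.
have hden : 0 < (ee w1 u1 w2 u2)^+2 + 4 * (vv w1 u1 w2 u2)^+3.
  have := sqr_ge0 (ee w1 u1 w2 u2); have : 0 < (vv w1 u1 w2 u2)^+3 by apply: exprn_gt0.
  lra.
have hr : w1 * w2 / (w1 + w2)^+2 = w1' * w2' / (w1' + w2')^+2.
  have E := rid _ _ _ _ h1 h2 hu.
  have E' := rid _ _ _ _ h1' h2' hu'.
  rewrite -hv -he in E'.
  apply: (mulIf (lt0r_neq0 hden)).
  by rewrite E E'.
rewrite -hW in hr.
have hr' : w1 * w2 = w1' * w2'.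
  apply: (@mulIf _ ((w1 + w2)^+2)^-1); first by rewrite invr_neq0 // expf_neq0.
  exact: hr.
move: hv; rewrite /vv -hW => hv.
have hd2 : (u2 - u1)^+2 = (u2' - u1')^+2.
  have : w1 * w2 * (u2 - u1) ^+ 2 = w1' * w2' * (u2' - u1') ^+ 2.
    apply: (@mulIf _ ((w1 + w2)^+2)^-1); first by rewrite invr_neq0 // expf_neq0.
    exact: hv.
  rewrite -hr'; apply: mulfI; exact: mulf_neq0.
have hd : u2 - u1 = u2' - u1'.
  apply/eqP; rewrite -(@eqrXn2 _ 2) ?hd2 ?eqxx //; lra.
move: he; rewrite /ee -hW -hd => he.
have hdiff : w1 - w2 = w1' - w2'.
  have : w1 * w2 * (w1 - w2) * (u2 - u1) ^+ 3 = w1' * w2' * (w1' - w2') * (u2 - u1) ^+ 3.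
    apply: (@mulIf _ ((w1 + w2)^+3)^-1); first by rewrite invr_neq0 // expf_neq0.
    exact: he.
  rewrite -hr' => /(mulIf _) H.
  have {}H := H (expf_neq0 _ hdn).
  by apply: (mulfI _ H); exact: mulf_neq0.
have e1 : w1 = w1' by lra.
have e2 : w2 = w2' by lra.
move: hx; rewrite /mu -hW -e1 -e2 => hx.
have hx' : w1 * u1 + w2 * u2 = w1 * u1' + w2 * u2'.
  apply: (@mulIf _ (w1 + w2)^-1); first by rewrite invr_neq0.
  exact: hx.
have : (w1 + w2) * (u1 - u1') = 0.
  have -> : (w1 + w2) * (u1 - u1') = (w1 * u1 + w2 * u2) - (w1 * u1' + w2 * u2') + w2 * ((u2' - u1') - (u2 - u1)).
    by ring.
  by rewrite hx' hd !subrr mulr0 addr0.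
move/eqP; rewrite mulf_eq0 (negPf hWn) /= subr_eq0 => /eqP e3.
split => //; lra.
Qed.

Lemma vv_gt0 (w1 u1 w2 u2 : R) : 0 < w1 -> 0 < w2 -> u1 < u2 -> 0 < vv w1 u1 w2 u2.
Proof.
move=> h1 h2 hu; rewrite /vv; apply: divr_gt0; last by apply: exprn_gt0; lra.
apply: mulr_gt0; first exact: mulr_gt0.
by apply: exprn_gt0; lra.
Qed.

End Alg.
Arguments Mc {R}.
Arguments mu {R}.
Arguments vv {R}.
Arguments ee {R}.

Section MexpS.
Variable R : realType.
Variable K : R -> R.
Hypothesis hn : normalized K.
Let m := kmoment K 3.
Let m4 := kmoment K 4.

Lemma Mexp (w1 u1 w2 u2 s : R) :
  [/\ Mmap K (w1,u1,w2,u2,s) 0 = w1 + w2,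
      Mmap K (w1,u1,w2,u2,s) 1 = w1*u1 + w2*u2,
      Mmap K (w1,u1,w2,u2,s) 2 = w1*(u1^+2 + s^+2) + w2*(u2^+2+s^+2),
      Mmap K (w1,u1,w2,u2,s) 3 = w1*(u1^+3 + 3*s^+2*u1 + m * s^+3) + w2*(u2^+3 + 3*s^+2*u2 + m * s^+3) &
      Mmap K (w1,u1,w2,u2,s) 4 = w1*(u1^+4 + 6*s^+2*u1^+2 + 4 * m * s^+3*u1 + m4 * s^+4)
                               + w2*(u2^+4 + 6*s^+2*u2^+2 + 4 * m * s^+3*u2 + m4 * s^+4)].
Proof.
case: hn => h0 [h1 h2].
rewrite /Mmap /Delta /m /m4; split; rewrite !big_ord_recr !big_ord0 /=.
- rewrite h0 ?bin0 ?binn; ring.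
- rewrite h0 h1 ?bin0 ?binn. ring.
- rewrite h0 h1 h2 ?bin0 ?binn (_ : 'C(2,1) = 2%N) //; ring.
- rewrite h0 h1 h2 ?bin0 ?binn (_ : 'C(3,1) = 3%N) // (_ : 'C(3,2) = 3%N) //; ring.
- rewrite h0 h1 h2 ?bin0 ?binn (_ : 'C(4,1) = 4%N) // (_ : 'C(4,2) = 6%N) // (_ : 'C(4,3) = 4%N) //; ring.
Qed.
End MexpS.
Arguments Mexp {R K}.

Lemma MmapE (R : realType) (K : R -> R) (hn : normalized K) (w1 u1 w2 u2 s : R) (j : nat) :
  0 < w1 -> 0 < w2 -> u1 < u2 -> (j < 5)%N ->
  Mmap K (w1,u1,w2,u2,s) j = Mc (kmoment K 3) (kmoment K 4) (w1 + w2) (mu w1 u1 w2 u2) (vv w1 u1 w2 u2) (ee w1 u1 w2 u2) s j.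
Proof.
move=> h1 h2 hu hj.
have [E0 E1 E2 E3 E4] := Mexp hn w1 u1 w2 u2 s.
have [C1 C2 C3 C4] := @cumE _ (kmoment K 3) (kmoment K 4) w1 u1 w2 u2 s h1 h2 hu.
case: j hj => [|[|[|[|[|j]]]]] hj //.
- by rewrite E1 C1.
- by rewrite E2 C2.
- by rewrite E3 C3.
- by rewrite E4 C4.
Qed.

Theorem corollary2p6 (R : realType) (K : R -> R) :
  is_kernel K -> normalized K ->
  (injective_on_Omega K <->
   3 + 9 / 8 * kmoment K 3 ^+ 2 <= kmoment K 4).
Proof.
move=> _ hn.
split.
- move=> inj; rewrite leNgt; apply/negP => hlt.
  have hc : kmoment K 4 - 3 < 9/8 * kmoment K 3 ^+2 by lra.
  have [t1 [t2 [v1 [v2 [e1 [e2 [[ht1 ht12 hv1 hv2] [hA hB hC]]]]]]]] := @counter _ _ _ hc.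
  have [a1 [b1 [a2 [b2 [[ha1 ha2 hb1 hW1] [hx1 hvv1 hee1]]]]]] := @build _ v1 e1 hv1.
  have [c1 [d1 [c2 [d2 [[hc1 hc2 hd1 hW2] [hx2 hvv2 hee2]]]]]] := @build _ v2 e2 hv2.
  have E : (a1,b1,a2,b2,t1) = (c1,d1,c2,d2,t2).
    apply: inj.
    + by rewrite /Omega; split => //; split => //; split.
    + by rewrite /Omega; split => //; split => //; split => //; lra.
    + move=> [j hj]; rewrite !(@MmapE _ K hn) // hW1 hW2 hx1 hx2 hvv1 hvv2 hee1 hee2.
      case: j hj => [|[|[|[|[|j]]]]] hj //=.
      * by rewrite hA.
      * by rewrite hA hB.
      * by rewrite hA hB hC.
  case: E => _ _ _ _ E; move: ht12; by rewrite E ltxx.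
- move=> hc [[[[w1 u1] w2] u2] s] [[[[w1' u1'] w2'] u2'] s'] /= [h1 [h2 [hu hs]]] [h1' [h2' [hu' hs']]] hM.
  have E : forall j, (j < 5)%N ->
    Mc (kmoment K 3) (kmoment K 4) (w1 + w2) (mu w1 u1 w2 u2) (vv w1 u1 w2 u2) (ee w1 u1 w2 u2) s j =
    Mc (kmoment K 3) (kmoment K 4) (w1' + w2') (mu w1' u1' w2' u2') (vv w1' u1' w2' u2') (ee w1' u1' w2' u2') s' j.
    by move=> j hj; rewrite -!(@MmapE _ K hn) //; exact: (hM (Ordinal hj)).
  have hv := @vv_gt0 _ w1 u1 w2 u2 h1 h2 hu.
  have hv' := @vv_gt0 _ w1' u1' w2' u2' h1' h2' hu'.
  move: (E 0%N isT) (E 1%N isT) (E 2%N isT) (E 3%N isT) (E 4%N isT) => /=.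
  move Ex : (mu w1 u1 w2 u2) => x.
  move Ex' : (mu w1' u1' w2' u2') => x'.
  have hWn : w1 + w2 != 0 by apply/lt0r_neq0; lra.
  move Ev : (vv w1 u1 w2 u2) hv => v hv.
  move Ev' : (vv w1' u1' w2' u2') hv' => v' hv'.
  move Ee : (ee w1 u1 w2 u2) => e.
  move Ee' : (ee w1' u1' w2' u2') => e'.
  move=> E0; rewrite -E0 => E1 E2 E3 E4.
  have hx : x = x' := mulfI hWn E1.
  rewrite -hx in E2 E3 E4.
  have hA : v + s^+2 = v' + s'^+2 by move: (mulfI hWn E2); lra.
  rewrite -hA in E3 E4.
  have hB : e + kmoment K 3 * s^+3 = e' + kmoment K 3 * s'^+3 by move: (mulfI hWn E3); lra.
  rewrite -hB in E4.
  have hC : e^+2/v - 2*v^+2 + (kmoment K 4 - 3) * s^+4 = e'^+2/v' - 2*v'^+2 + (kmoment K 4 - 3) * s'^+4.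
    by move: (mulfI hWn E4); lra.
  have hc' : 9/8 * kmoment K 3 ^+ 2 <= kmoment K 4 - 3 by lra.
  case: (ltgtP s s') => hss.
  + exfalso; apply: (@sig_contra _ (kmoment K 3) (kmoment K 4 - 3) (v + s^+2) s s' e e') => //.
    * by rewrite hA; lra.
    * have -> : v + s^+2 - s^+2 = v by ring.
      have -> : v + s^+2 - s'^+2 = v' by rewrite hA; ring.
      exact: hC.
  + exfalso; apply: (@sig_contra _ (kmoment K 3) (kmoment K 4 - 3) (v' + s'^+2) s' s e' e) => //.
    * by rewrite -hA; lra.
    * have -> : v' + s'^+2 - s'^+2 = v' by ring.
      have -> : v' + s'^+2 - s^+2 = v by rewrite -hA; ring.
      exact: (esym hC).
  + subst s'.
    have ev : v = v' by lra.
    have ee' : e = e' by lra.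
    have [-> -> -> ->] := @recover _ w1 u1 w2 u2 w1' u1' w2' u2' h1 h2 hu h1' h2' hu' E0 (etrans Ex (etrans hx (esym Ex'))) (etrans Ev (etrans ev (esym Ev'))) (etrans Ee (etrans ee' (esym Ee'))).
    by [].
Qed.
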